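(* Let $m\le n/\log^2 n$ be a positive integer and consider the Move-to-the-Back Dealer $\mathcal D_m$ with parameters $k_1=n/(8e\log n)$, $\ell=m\log n$, $u=\ell$, $d=(k_1-2m\log n)/\ell$, and $k_i=k_1-(i-1)\ell$. For every Guesser with $m$ bits of memory and every epoch $i\in[d]$, the expected number $c_i$ of correct guesses during the $i$-th epoch satisfies $$c_i\le \frac{r_i}{k_i-\ell-u},$$ where $r_i$ is the expected number of reasonable guesses during the $i$-th epoch.
   Context: Card guessing game: a deck of $n$ distinct cards labeled $1,\dots,n$; $n$ turns; in each turn the Dealer selects a card from the remaining deck and places it face down, the Guesser names a card of $[n]$, and the card is revealed and discarded. A guess is correct if it equals the drawn card. A Guesser with $m$ bits of memory keeps a state in $\{0,1\}^m$ between turns and consists of a (possibly randomized) guessing function (state $\mapsto$ guess) and a (possibly randomized) state-transition function (state and revealed card $\mapsto$ new state); she may use unlimited randomness and computation. The Dealer $\mathcal D_m$ (rounding ignored): (1) while more than $k_1$ cards remain, it draws a uniformly random card of the remaining deck; (2) for $i=1,\dots,d$, the $i$-th epoch consists of the $\ell$ turns starting when $k_i$ cards remain; at the start of each epoch a set $B$ is set to $\emptyset$; in each turn of the epoch the Dealer draws a uniformly random card of (remaining deck)$\setminus B$, and after the Guesser's guess $g$ in that turn, if $g$ is still in the remaining deck and $|B|<u$, then $g$ is added to $B$; (3) when $2m\log n$ cards remain, it draws uniformly random cards from the remaining deck until the end. A guess during an epoch is reasonable if it is a card of (remaining deck)$\setminus B$ at that turn. Expectations are over the randomness of both players. $\log$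 is base 2. *)

(* Defs.v *)
From mathcomp Require Import all_boot all_order all_algebra.
From mathcomp Require Import reals sequences exp.
Set Implicit Arguments. Unset Strict Implicit. Unset Printing Implicit Defensive.
Import Order.TTheory GRing.Theory Num.Theory.
Local Open Scope ring_scope.

Section CardGame.
Variable R : realType.

Definition log2 (x : R) : R := ln x / ln 2.

Definition is_distr (T : finType) (p : T -> R) :=
  (forall x, 0 <= p x) /\ \sum_(x : T) p x = 1.

Definition mstate (m : nat) := {ffun 'I_m -> bool}.

(** A Guesser with m bits of memory for the deck [n] = 'I_n:
    an initial (possibly random) state, a randomized guessing function
    state |-> guess, and a randomized state-transition function
    (state, revealed card) |-> new state. *)
Record guesser (n m : nat) := Guesser {
  g_init  : mstate m -> R;
  g_guess : mstate m -> 'I_n -> R;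
  g_trans : mstate m -> 'I_n -> mstate m -> R }.

Definition valid_guesser n m (G : guesser n m) :=
  [/\ is_distr (g_init G),
      forall s, is_distr (g_guess G s) &
      forall s c, is_distr (g_trans G s c)].

Section Params.
Variables n m : nat.
Definition k1 : nat := Num.truncn (n%:R / (8 * expR 1 * log2 n%:R)).
Definition ell : nat := Num.truncn (m%:R * log2 n%:R).
Definition uu : nat := ell.
Definition dd : nat :=
  Num.truncn (((k1%:R : R) - 2 * m%:R * log2 n%:R) / ell%:R).
Definition kk (i : nat) : nat := (k1 - i.-1 * ell)%N.

Definition inEpoch (k : nat) : bool :=
  has (fun i => (kk i - ell < k <= kk i)%N) (iota 1 dd).
Definition startEpoch (k : nat) : bool :=
  has (fun i => k == kk i) (iota 1 dd).
End Params.

Section Game.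
Variables n m : nat.
Variable G : guesser n m.

(** configuration between turns: (remaining deck, the set B, memory state) *)
Definition conf := ({set 'I_n} * {set 'I_n} * mstate m)%type.

Definition Beff (deck B : {set 'I_n}) : {set 'I_n} :=
  if startEpoch n m #|deck| then set0 else B.

Definition draw (deck B : {set 'I_n}) (c : 'I_n) : R :=
  let A := if inEpoch n m #|deck| then deck :\: B else deck in
  if c \in A then (#|A|%:R)^-1 else 0.

Definition newB (deck B : {set 'I_n}) (g c : 'I_n) : {set 'I_n} :=
  if inEpoch n m #|deck| && (g \in deck :\ c) && (#|B| < uu n m)%N
  then g |: B else B.

Definition step (mu : conf -> R) : conf -> R := fun x' =>
  \sum_(x : conf) mu x *
    \sum_(g : 'I_n) \sum_(c : 'I_n)
      let: (deck, B0, s) := x in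
      let B := Beff deck B0 in
      g_guess G s g * draw deck B c * g_trans G s c x'.2 *
      ((x'.1.1 == deck :\ c) && (x'.1.2 == newB deck B g c))%:R.

Definition mu0 : conf -> R := fun x =>
  (x.1 == (setT, set0))%:R * g_init G x.2.

Definition mu_at (t : nat) : conf -> R := iter t step mu0.

Definition prob_turn (t : nat)
    (E : {set 'I_n} -> {set 'I_n} -> 'I_n -> 'I_n -> bool) : R :=
  \sum_(x : conf) mu_at t x *
    \sum_(g : 'I_n) \sum_(c : 'I_n)
      let: (deck, B0, s) := x in
      let B := Beff deck B0 in
      g_guess G s g * draw deck B c * (E deck B g c)%:R.

Definition correct_ev (deck B : {set 'I_n}) (g c : 'I_n) : bool := g == c.
Definition reasonable_ev (deck B : {set 'I_n}) (g c : 'I_n) : bool :=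
  g \in deck :\: B.

(** turn t (0-indexed) is in epoch i iff the number n - t of remaining cards
    satisfies k_i - ell < n - t <= k_i *)
Definition in_epoch_i (i t : nat) : bool :=
  (kk n m i - ell n m < n - t <= kk n m i)%N.

Definition c_epoch (i : nat) : R :=
  \sum_(t < n | in_epoch_i i t) prob_turn t correct_ev.
Definition r_epoch (i : nat) : R :=
  \sum_(t < n | in_epoch_i i t) prob_turn t reasonable_ev.
End Game.
End CardGame.

(* Main.v *)
Require Import Defs.
From mathcomp Require Import all_boot all_order all_algebra.
From mathcomp Require Import reals sequences exp.
From mathcomp Require Import zify lra.
Import Order.TTheory GRing.Theory Num.Theory.
Local Open Scope ring_scope.

Lemma trunc_le_pos (R : realType) (x : R) : (0 < Num.truncn x)%N -> (Num.truncn x)%:R <= x /\ 1 <= x.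
Proof. rewrite truncn_gt0 => h; split => //; rewrite truncn_le; lra. Qed.

Lemma arith_ep (R : realType) n m i : (1 <= i <= dd R n m)%N ->
  (0 < ell R n m)%N /\ (2 * ell R n m < kk R n m i)%N.
Proof.
move=> /andP[i1 id].
have dpos : (0 < dd R n m)%N by lia.
have ellpos : (0 < ell R n m)%N.
  move: dpos; rewrite /dd; case: (ell R n m) => [|e] //.
  by rewrite invr0 mulr0 truncn0.
split => //.
have [hd hd1] := @trunc_le_pos R _ dpos.
have [he he1] := @trunc_le_pos R _ ellpos.
rewrite /dd /ell in hd hd1 he he1 ellpos *.
set L := m%:R * log2 n%:R in hd hd1 he he1 ellpos *.
set e := Num.truncn L in hd hd1 he he1 ellpos *.
set d := Num.truncn _ in hd hd1 id dpos *.
have epos : 0 < (e%:R : R) by rewrite ltr0n.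
have h1 : (d%:R : R) * e%:R <= (k1 R n)%:R - 2 * L.
  by rewrite -ler_pdivlMr // /L mulrA.
have hi : (i%:R : R) <= d%:R by rewrite ler_nat.
have h2 : (i.+2 * e <= k1 R n)%N.
  rewrite -(ler_nat R) (_ : (i.+2 * e = i * e + 2 * e)%N); last by lia.
  rewrite natrD !natrM.
  have : (i%:R : R) * e%:R <= d%:R * e%:R by rewrite ler_pM2r.
  lra.
rewrite /kk /ell -/L -/e -subn1. lia.
Qed.

Lemma aux_nat k e D I Bc t N : (k - e < N - t <= k)%N -> (D + t = N)%N ->
  (I <= Bc)%N -> (Bc <= e)%N -> (2*e < k)%N -> (k - 2*e <= D - I)%N.
Proof. lia. Qed.

Section S.
Variables (R : realType) (n m : nat) (G : guesser R n m).
Hypothesis HG : valid_guesser G.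

Lemma draw_ge0 (deck B : {set 'I_n}) c : 0 <= draw R m deck B c.
Proof. rewrite /draw /=; case: ifP => _ //; rewrite invr_ge0 ler0n //. Qed.

Lemma mu_ge0 t x : 0 <= mu_at G t x.
Proof.
case: HG => [[hi _] hg ht].
elim: t x => [|t IH] x.
  by rewrite /mu_at /= /mu0 mulr_ge0 ?ler0n.
rewrite /mu_at iterS -/(mu_at G t) /step.
apply: sumr_ge0 => [[[d B] s]] _; apply: mulr_ge0 => //.
apply: sumr_ge0 => g _; apply: sumr_ge0 => c _.
rewrite !mulr_ge0 ?ler0n ?draw_ge0 //; [case: (hg s) => -> // | case: (ht s c) => -> //].
Qed.

Definition Pinv t (x : conf n m) : bool :=
  (#|x.1.1| + t == n)%N && (#|x.1.2| <= uu R n m)%N.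

Lemma mu_zero t x : ~~ Pinv t x -> mu_at G t x = 0.
Proof.
elim: t x => [|t IH] x.
  rewrite /mu_at /= /mu0 => h; case: eqP => [hx|_]; last by rewrite mul0r.
  exfalso; move/negP: h; apply.
  by rewrite /Pinv hx /= cardsT card_ord cards0 addn0 eqxx.
move=> hx.
rewrite /mu_at iterS -/(mu_at G t) /step.
apply: big1 => [[[d B0] s]] _.
have [hP|hP] := boolP (Pinv t (d, B0, s)); last by rewrite IH ?mul0r.
rewrite big1 ?mulr0 // => g _; rewrite big1 // => c _.
rewrite /draw /=.
case: ifP => hc; last by rewrite !(mulr0, mul0r).
case hind: ((x.1.1 == d :\ c) && _); last by rewrite mulr0.
exfalso; move/negP: hx; apply.
move/andP: hind => [/eqP h1 /eqP h2].
move/andP: hP => [/eqP p1 p2] /=.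
have cd : c \in d.
  move: hc; case: ifP => _ //; rewrite inE => /andP[] //.
rewrite /Pinv h1 h2 /=.
apply/andP; split.
  rewrite /= in p1 p2; apply/eqP; move: (cardsD1 c d); rewrite cd /= => hh. rewrite /reverse_coercion in p1 p2 *. lia.
have hB : (#|Beff R m d B0| <= uu R n m)%N.
  by rewrite /Beff; case: ifP => _ //; rewrite cards0.
rewrite /newB; case: ifP => // /andP[/andP[_ _] hlt].
rewrite cardsU1; rewrite /reverse_coercion in hB hlt *; case: (_ \notin _) => /=; [exact: hlt | exact: hB].
Qed.


Lemma turn_bound i t : (1 <= i <= dd R n m)%N -> in_epoch_i R n m i t ->
  prob_turn G t (@correct_ev n) <=
  prob_turn G t (@reasonable_ev n) /
    ((kk R n m i)%:R - (ell R n m)%:R - (uu R n m)%:R).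
Proof.
move=> hi hep.
have [ep kp] := @arith_ep R n m i hi.
set D := (_ - _ - _ : R).
have hD : D = ((kk R n m i - 2 * ell R n m)%N)%:R.
  rewrite /D /uu.
  have -> : ((kk R n m i)%:R : R) =
     ((kk R n m i - 2 * ell R n m)%N)%:R + (ell R n m)%:R + (ell R n m)%:R.
    by rewrite -!natrD; congr (_%:R); lia.
  lra.
have Dpos : 0 < D by rewrite hD ltr0n; lia.
rewrite /prob_turn mulr_suml; apply: ler_sum => -[[d B0] s] _.
case hP: (Pinv t (d, B0, s)); last by rewrite mu_zero ?hP // !mul0r.
move/andP: hP => [/eqP /= p1 /= p2].
rewrite /reverse_coercion in p1 p2.
have hin : inEpoch R n m #|d|.
  apply/hasP; exists i; first by rewrite mem_iota; lia.
  move: hep; rewrite /in_epoch_i /reverse_coercion /=; lia.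
rewrite -mulrA; apply: ler_wpM2l; first exact: mu_ge0.
rewrite /correct_ev /reasonable_ev /=.
set B := Beff R m d B0.
set A := d :\: B.
have hdraw c : draw R m d B c = if c \in A then (#|A|%:R)^-1 else 0.
  by rewrite /draw hin.
have hB : (#|B| <= uu R n m)%N.
  by rewrite /B /Beff; case: ifP => _ //; rewrite cards0.
have cardA : D <= #|A|%:R.
  rewrite hD ler_nat /A cardsD.
  apply: (aux_nat (kk R n m i) (ell R n m) _ _ _ t n). exact: hep. exact: p1. exact: (subset_leq_card (subsetIr d B)). exact: hB. exact: kp.
case: HG => [_ hg _].
have g0 g : 0 <= g_guess G s g by case: (hg s) => ->.
rewrite mulr_suml; apply: ler_sum => g _.
case gA : (g \in A).
- rewrite (bigD1 g) //= eqxx mulr1 big1 ?addr0; last first.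
    by move=> c /negbTE; rewrite eq_sym => ->; rewrite mulr0.
under eq_bigr do rewrite mulr1.
  rewrite -big_distrr /= hdraw gA.
  have -> : \sum_(c < n) draw R m d B c = 1.
    under eq_bigr do rewrite hdraw.
    rewrite -big_mkcond sumr_const -(mulr_natl ((#|A|%:R : R)^-1) #|A|) mulfV // pnatr_eq0 -lt0n.
    by apply/card_gt0P; exists g.
  rewrite mulr1 ler_wpM2l // lef_pV2 // posrE //.
  rewrite ltr0n; apply/card_gt0P; exists g => //.
- rewrite [X in _ <= X / D]big1 ?mul0r; last by move=> c _; rewrite mulr0.
  rewrite big1 // => c _; case: eqP => [<-|]; last by rewrite mulr0.
  by rewrite hdraw gA mulr0 mul0r.
Qed.

End S.

Theorem mainTheorem11 (R : realType) (n m : nat) (G : guesser R n m) :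
  valid_guesser G ->
  (0 < m)%N ->
  (m%:R : R) <= n%:R / (log2 n%:R) ^+ 2 ->
  forall i : nat, (1 <= i <= dd R n m)%N ->
    c_epoch G i <=
      r_epoch G i / ((kk R n m i)%:R - (ell R n m)%:R - (uu R n m)%:R).
Proof.
move=> HG _ _ i hi.
rewrite /c_epoch /r_epoch mulr_suml; apply: ler_sum => t ht.
exact: turn_bound.
Qed.
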